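(* Let $C$ be a Pauli-Square-Root Clifford on $t$ qubits and let $P$ be a $(t+1)$-qubit Pauli acting on one control qubit together with these $t$ qubits. Then there exist a $(t+1)$-qubit Pauli $P'$, a $t$-qubit Pauli $Q$, and $b\in\{0,1\}$ such that $$C(C)\,P=(I\otimes C^{b})\,C(Q)\,P'\,C(C),$$ where $Q$ either commutes or anticommutes with $C$, and $\mathrm{Supp}(Q)\subseteq\mathrm{Supp}(C)$.
   Context: Paulis are tensor products of $I,X,Y,Z$ times a phase in $\{\pm1,\pm i\}$; a Clifford is a unitary mapping Paulis to Paulis under conjugation. A Pauli-Square-Root Clifford (PSC) is a Clifford that is not a Pauli and whose square is a Pauli. For a unitary $U$ on $t$ qubits, $C(U)=|0\rangle\langle0|\otimes I+|1\rangle\langle1|\otimes U$ on $1+t$ qubits (control first). $\mathrm{Supp}(W)$ denotes the set of qubits on which an operator $W$ acts nontrivially. *)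

(* Defs.v *)
From HB Require Import structures.
From mathcomp Require Import all_boot all_order all_algebra all_field.
Set Implicit Arguments. Unset Strict Implicit. Unset Printing Implicit Defensive.
Import Order.TTheory GRing.Theory Num.Theory.
Local Open Scope ring_scope.

(* Basis index i < 2^t encodes the bit string of t qubits; qubit j (0-based)
   is the bit of weight 2^(t-1-j), i.e. qubit 0 is the most significant
   (standard Kronecker ordering, leftmost tensor factor = qubit 0). *)
Definition qbit (t : nat) (i j : nat) : bool := odd (i %/ 2 ^ (t.-1 - j)).

(* Entries of the single-qubit Paulis: 0 = I, 1 = X, 2 = Y, 3 = Z;
   basis state false = |0>, true = |1>; sig s a b = <a| sigma_s |b>. *)
Definition sig (s : 'I_4) (a b : bool) : algC :=
  match val s with
  | 0 => if a == b then 1 else 0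
  | 1 => if a == b then 0 else 1
  | 2 => if a == b then 0 else if a then 'i else - 'i
  | _ => if a == b then (if a then -1 else 1) else 0
  end.

(* The tensor product sigma_{p 0} (x) ... (x) sigma_{p (t-1)}. *)
Definition pstr (t : nat) (p : 'I_t -> 'I_4) : 'M[algC]_(2 ^ t) :=
  \matrix_(i, k) \prod_(j < t) sig (p j) (qbit t i j) (qbit t k j).

Definition is_pauli (t : nat) (A : 'M[algC]_(2 ^ t)) : Prop :=
  exists (c : algC) (p : 'I_t -> 'I_4),
    c \in [:: 1; -1; 'i; - 'i] /\ A = c *: pstr p.

Definition adjmx n (A : 'M[algC]_n) : 'M[algC]_n := (map_mx Num.conj A)^T.

Definition unitary n (A : 'M[algC]_n) : Prop :=
  A *m adjmx A = 1%:M /\ adjmx A *m A = 1%:M.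

Definition clifford (t : nat) (U : 'M[algC]_(2 ^ t)) : Prop :=
  unitary U /\ forall P, is_pauli P -> is_pauli (U *m P *m adjmx U).

Definition PSC (t : nat) (C : 'M[algC]_(2 ^ t)) : Prop :=
  clifford C /\ ~ is_pauli C /\ is_pauli (C *m C).

Lemma exp2_gt0 (t : nat) : (0 < 2 ^ t)%N.
Proof. by rewrite expn_gt0. Qed.

Definition hi (t : nat) (i : 'I_(2 ^ t.+1)) : 'I_2 := insubd ord0 (i %/ 2 ^ t)%N.
Definition lo (t : nat) (i : 'I_(2 ^ t.+1)) : 'I_(2 ^ t) :=
  Ordinal (ltn_pmod i (exp2_gt0 t)).

(* Kronecker product A (x) B, A on the first qubit, B on the other t. *)
Definition tens2 (t : nat) (A : 'M[algC]_2) (B : 'M[algC]_(2 ^ t))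
  : 'M[algC]_(2 ^ t.+1) :=
  \matrix_(i, k) (A (hi i) (hi k) * B (lo i) (lo k)).

Definition ketbra (a : 'I_2) : 'M[algC]_2 := \matrix_(i, k) ((i == a) && (k == a))%:R.
Definition ctrl (t : nat) (U : 'M[algC]_(2 ^ t)) : 'M[algC]_(2 ^ t.+1) :=
  tens2 (ketbra ord0) 1%:M + tens2 (ketbra ord_max) U.

Definition clr (t : nat) (i : 'I_(2 ^ t)) (j : nat) : 'I_(2 ^ t) :=
  insubd i (i - qbit t i j * 2 ^ (t.-1 - j))%N.

(* W acts trivially on qubit j: W = I_j (x) W' for some W' on the other
   qubits (written out entrywise: W' is read off from the entries with
   bit j cleared). *)
Definition acts_trivially (t : nat) (W : 'M[algC]_(2 ^ t)) (j : 'I_t) : Prop :=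
  forall i k : 'I_(2 ^ t),
    W i k = if qbit t i j == qbit t k j then W (clr i j) (clr k j) else 0.

Definition in_supp (t : nat) (W : 'M[algC]_(2 ^ t)) (j : 'I_t) : Prop :=
  ~ acts_trivially W j.

(* Main.v *)
Require Import Defs.
From mathcomp Require Import all_boot all_order all_algebra all_field zify.
Import GRing.Theory Num.Theory.
Set Implicit Arguments. Unset Strict Implicit. Unset Printing Implicit Defensive.

Section Arith.
Variable e : nat.

Lemma decomp x : x = (x %/ 2 ^ e.+1 * 2 ^ e.+1 + odd (x %/ 2 ^ e) * 2 ^ e + x %% 2 ^ e)%N.
Proof.
rewrite {1}(divn_eq x (2 ^ e)); congr (_ + _)%N.
have -> : (x %/ 2 ^ e.+1 = (x %/ 2 ^ e)./2)%N by rewrite expnSr divnMA divn2.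
set q := (x %/ 2 ^ e)%N.
by rewrite expnS mulnA -mulnDl muln2 addnC odd_double_half.
Qed.

Definition cmp a (b : bool) r := (a * 2 ^ e.+1 + b * 2 ^ e + r)%N.

Lemma cmp_hi a b r : (r < 2 ^ e)%N -> (cmp a b r %/ 2 ^ e.+1 = a)%N.
Proof.
move=> hr; rewrite /cmp -addnA divnMDl ?expn_gt0 // divn_small ?addn0 //.
rewrite expnS mul2n -addnn; case: b => /=; rewrite ?mul1n ?mul0n ?add0n.
  by rewrite ltn_add2l.
by apply: (leq_trans hr); rewrite leq_addl.
Qed.

Lemma cmp_lo a b r : (r < 2 ^ e)%N -> (cmp a b r %% 2 ^ e = r)%N.
Proof.
move=> hr; rewrite /cmp expnS mulnA -mulnDl modnMDl modn_small //.
Qed.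

Lemma cmp_bit a b r : (r < 2 ^ e)%N -> odd (cmp a b r %/ 2 ^ e) = b.
Proof.
move=> hr; rewrite /cmp expnS mulnA -mulnDl divnMDl ?expn_gt0 // divn_small ?addn0 //.
by rewrite oddD oddM /= andbF; case: b.
Qed.

Lemma cmp_other a b b' r f : (r < 2 ^ e)%N -> f != e ->
  odd (cmp a b r %/ 2 ^ f) = odd (cmp a b' r %/ 2 ^ f).
Proof.
move=> hr; case: (ltngtP f e) => // hf _.
  have E (c : bool) : cmp a c r = ((a * 2 ^ (e.+1 - f) + c * 2 ^ (e - f)) * 2 ^ f + r)%N.
    rewrite /cmp mulnDl -!mulnA -!expnD subnK ?subnK //; first exact: ltnW.
    exact: ltnW (leqW hf).
  rewrite !E !divnMDl ?expn_gt0 // !oddD !oddM !oddX /=.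
  have -> : (e.+1 - f == 0)%N = false by apply/negbTE; rewrite subn_eq0 -ltnNge ltnS ltnW.
  have -> : (e - f == 0)%N = false by apply/negbTE; rewrite subn_eq0 -ltnNge.
  by rewrite !andbF.
have E (c : bool) : (cmp a c r %/ 2 ^ f = a %/ 2 ^ (f - e.+1))%N.
  have -> : (2 ^ f = 2 ^ e.+1 * 2 ^ (f - e.+1))%N by rewrite -expnD subnKC.
  by rewrite divnMA cmp_hi.
by rewrite !E.
Qed.

Lemma cmp_high a b b' r f : (r < 2 ^ e)%N -> (e < f)%N ->
  (cmp a b r %/ 2 ^ f = cmp a b' r %/ 2 ^ f)%N.
Proof.
move=> hr hf.
have E (c : bool) : (cmp a c r %/ 2 ^ f = a %/ 2 ^ (f - e.+1))%N.
  have -> : (2 ^ f = 2 ^ e.+1 * 2 ^ (f - e.+1))%N by rewrite -expnD subnKC.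
  by rewrite divnMA cmp_hi.
by rewrite !E.
Qed.

Definition setb x c := cmp (x %/ 2 ^ e.+1) c (x %% 2 ^ e).

Lemma setb_self x : setb x (odd (x %/ 2 ^ e)) = x.
Proof. by rewrite /setb /cmp -decomp. Qed.

Lemma setb_bit x c f : odd (setb x c %/ 2 ^ f) = if f == e then c else odd (x %/ 2 ^ f).
Proof.
have hr : (x %% 2 ^ e < 2 ^ e)%N by rewrite ltn_mod expn_gt0.
case: eqP => [->|/eqP ne]; first exact: cmp_bit.
by rewrite -{2}(setb_self x); apply: cmp_other.
Qed.

Lemma setb_lt x c t : (e < t)%N -> (x < 2 ^ t)%N -> (setb x c < 2 ^ t)%N.
Proof.
move=> et xt.
have hr : (x %% 2 ^ e < 2 ^ e)%N by rewrite ltn_mod expn_gt0.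
rewrite -[(2 ^ t)%N]mul1n -ltn_divLR ?expn_gt0 // ltnS leqn0; apply/eqP.
have := cmp_high (x %/ 2 ^ e.+1) c (odd (x %/ 2 ^ e)) hr et.
rewrite /setb => ->; rewrite -/(setb x _) setb_self.
by rewrite divn_small.
Qed.

Lemma setb_false x : (x - odd (x %/ 2 ^ e) * 2 ^ e)%N = setb x false.
Proof.
rewrite {1}(decomp x) /setb /cmp mul0n addn0.
by rewrite addnAC addnK.
Qed.

End Arith.

Lemma bits_uniq n x y : (x < 2 ^ n)%N -> (y < 2 ^ n)%N ->
  (forall f, (f < n)%N -> odd (x %/ 2 ^ f) = odd (y %/ 2 ^ f)) -> x = y.
Proof.
elim: n x y => [|n IH] x y.
  by rewrite expn0 !ltnS !leqn0 => /eqP -> /eqP ->.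
move=> hx hy H.
have h2 : x./2 = y./2.
  apply: IH.
  - by rewrite -divn2 ltn_divLR // -expnSr.
  - by rewrite -divn2 ltn_divLR // -expnSr.
  move=> f hf; rewrite -!divn2 -!divnMA -expnS; exact: H.
have h1 : odd x = odd y by have := H 0%N isT; rewrite expn0 !divn1.
by rewrite -(odd_double_half x) -(odd_double_half y) h1 h2.
Qed.



Local Open Scope ring_scope.

Lemma hiE t (i : 'I_(2 ^ t.+1)) : val (hi i) = (i %/ 2 ^ t)%N.
Proof.
rewrite /hi insubdK //; rewrite unfold_in /= ltn_divLR ?expn_gt0 //.
by rewrite -expnS.
Qed.

Lemma loE t (i : 'I_(2 ^ t.+1)) : val (lo i) = (i %% 2 ^ t)%N.
Proof. by []. Qed.

Lemma hiloE t (i : 'I_(2 ^ t.+1)) : val i = (hi i * 2 ^ t + lo i)%N.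
Proof. by rewrite hiE loE -divn_eq. Qed.

Lemma mk_lt t (a : 'I_2) (b : 'I_(2 ^ t)) : (a * 2 ^ t + b < 2 ^ t.+1)%N.
Proof.
have := ltn_ord a; have := ltn_ord b; rewrite expnS => hb ha.
have : (a * 2 ^ t + b < a * 2 ^ t + 2 ^ t)%N by rewrite ltn_add2l.
move/leq_trans; apply.
rewrite -[X in (_ + X)%N]mul1n -mulnDl leq_mul2r.
by case: a ha => [[|[|]]] //= ; rewrite orbT.
Qed.

Definition mk t (a : 'I_2) (b : 'I_(2 ^ t)) : 'I_(2 ^ t.+1) := Ordinal (mk_lt a b).

Lemma hi_mk t a b : hi (@mk t a b) = a.
Proof.
apply: val_inj; rewrite hiE /= divnMDl ?expn_gt0 // divn_small ?addn0 //.
Qed.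

Lemma lo_mk t a b : lo (@mk t a b) = b.
Proof.
apply: val_inj; rewrite loE /= modnMDl modn_small //.
Qed.

Lemma mk_hilo t (i : 'I_(2 ^ t.+1)) : mk (hi i) (lo i) = i.
Proof. by apply: val_inj; rewrite /= -hiloE. Qed.

Lemma sum_split t (F : 'I_(2 ^ t.+1) -> algC) :
  \sum_m F m = \sum_(a < 2) \sum_(b < 2 ^ t) F (mk a b).
Proof.
rewrite pair_big /=.
rewrite (reindex (fun p : 'I_2 * 'I_(2 ^ t) => mk p.1 p.2)) //=.
exists (fun m => (hi m, lo m)) => [[a b] _|m _] /=.
  by rewrite hi_mk lo_mk.
by rewrite mk_hilo.
Qed.

Lemma tens2E t A B i k : @tens2 t A B i k = A (hi i) (hi k) * B (lo i) (lo k).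
Proof. by rewrite mxE. Qed.

Lemma tens2_mul t (A A' : 'M[algC]_2) (B B' : 'M[algC]_(2 ^ t)) :
  tens2 A B *m tens2 A' B' = tens2 (A *m A') (B *m B').
Proof.
apply/matrixP => i k; rewrite !mxE sum_split big_distrlr /=.
apply: eq_bigr => a _; apply: eq_bigr => b _.
rewrite !tens2E hi_mk lo_mk.
by rewrite mulrACA.
Qed.

Lemma tens2_1 t : tens2 1%:M (1%:M : 'M[algC]_(2 ^ t)) = 1%:M.
Proof.
apply/matrixP => i k; rewrite tens2E !mxE -natrM mulnb.
suff -> : ((hi i == hi k) && (lo i == lo k)) = (i == k) by [].
apply/idP/idP.
  by case/andP => /eqP h /eqP l; rewrite -(mk_hilo i) -(mk_hilo k) h l.
by move/eqP->; rewrite !eqxx.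
Qed.

Lemma tens2Dl t (A A' : 'M[algC]_2) (B : 'M[algC]_(2 ^ t)) :
  tens2 (A + A') B = tens2 A B + tens2 A' B.
Proof. by apply/matrixP => i k; rewrite !mxE mulrDl. Qed.
Lemma tens2Dr t (A : 'M[algC]_2) (B B' : 'M[algC]_(2 ^ t)) :
  tens2 A (B + B') = tens2 A B + tens2 A B'.
Proof. by apply/matrixP => i k; rewrite !mxE mulrDr. Qed.
Lemma tens2Zl t c (A : 'M[algC]_2) (B : 'M[algC]_(2 ^ t)) :
  tens2 (c *: A) B = c *: tens2 A B.
Proof. by apply/matrixP => i k; rewrite !mxE mulrA. Qed.
Lemma tens2Zr t c (A : 'M[algC]_2) (B : 'M[algC]_(2 ^ t)) :
  tens2 A (c *: B) = c *: tens2 A B.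
Proof. by apply/matrixP => i k; rewrite !mxE mulrCA. Qed.
Lemma tens20l t (B : 'M[algC]_(2 ^ t)) : tens2 0 B = 0.
Proof. by apply/matrixP => i k; rewrite !mxE mul0r. Qed.

Lemma odd_div_mod x e t : (e < t)%N -> odd (x %/ 2 ^ e) = odd ((x %% 2 ^ t) %/ 2 ^ e).
Proof.
move=> et.
rewrite {1}(divn_eq x (2 ^ t)) divnDl; last first.
  by apply: dvdn_mull; rewrite dvdn_exp2l // ltnW.
rewrite oddD.
have -> : (2 ^ t = 2 ^ (t - e) * 2 ^ e)%N by rewrite -expnD subnK // ltnW.
rewrite mulnA mulnK ?expn_gt0 // oddM oddX /=.
by rewrite subn_eq0 leqNgt et andbF.
Qed.

Lemma qbit_hi t (i : 'I_(2 ^ t.+1)) : qbit t.+1 i (@ord0 t) = odd (hi i).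
Proof. by rewrite /qbit hiE /= subn0. Qed.

Lemma qbit_lift t (i : 'I_(2 ^ t.+1)) (j : 'I_t) :
  qbit t.+1 i (lift ord0 j) = qbit t (lo i) j.
Proof.
rewrite /qbit loE /= /bump leq0n add1n.
have -> : (t - j.+1 = t.-1 - j)%N by have := ltn_ord j; lia.
apply: odd_div_mod; have := ltn_ord j; lia.
Qed.

Definition sigm (s : 'I_4) : 'M[algC]_2 := \matrix_(a, b) sig s (odd a) (odd b).

Lemma pstr_ext t (p q : 'I_t -> 'I_4) : p =1 q -> pstr p = pstr q.
Proof. by move=> e; apply/matrixP => i k; rewrite !mxE; apply: eq_bigr => j _; rewrite e. Qed.

Lemma pstrS t (p : 'I_t.+1 -> 'I_4) :
  pstr p = tens2 (sigm (p ord0)) (pstr (fun j => p (lift ord0 j))).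
Proof.
apply/matrixP => i k; rewrite tens2E !mxE big_ord_recl.
rewrite !qbit_hi; congr (_ * _); apply: eq_bigr => j _.
by rewrite !qbit_lift.
Qed.

Lemma pstr0 (p : 'I_0 -> 'I_4) : pstr p = 1%:M.
Proof.
apply/matrixP => i k; rewrite !mxE big_ord0.
by case: i k => [[|//] ?] [[|//] ?].
Qed.

Definition phase (c : algC) := c \in [:: 1; -1; 'i; - 'i].
Definition sgn (c : algC) := c \in [:: 1; -1].

Lemma ii : 'i * 'i = -1 :> algC.
Proof. by rewrite -expr2 sqrCi. Qed.

Lemma phaseM a b : phase a -> phase b -> phase (a * b).
Proof.
rewrite /phase !inE.
case/or4P => /eqP -> ; case/or4P => /eqP -> ;
 rewrite ?mul1r ?mulr1 ?mulN1r ?mulrN1 ?opprK ?mulrN ?mulNr ?ii ?opprK ?eqxx ?orbT //.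
Qed.

Lemma sgnM a b : sgn a -> sgn b -> sgn (a * b).
Proof.
rewrite /sgn !inE.
by case/orP => /eqP -> ; case/orP => /eqP -> ; rewrite ?mul1r ?mulr1 ?mulN1r ?opprK ?eqxx ?orbT.
Qed.

Lemma sgn_phase a : sgn a -> phase a.
Proof. by rewrite /sgn /phase !inE; case/orP => ->; rewrite ?orbT. Qed.

Lemma sgn_sq a : sgn a -> a * a = 1.
Proof. by rewrite /sgn !inE; case/orP => /eqP ->; rewrite ?mul1r ?mulN1r ?opprK. Qed.

Lemma phase_sq a : phase a -> sgn (a * a).
Proof.
rewrite /phase /sgn !inE.
by case/or4P => /eqP -> ; rewrite ?mul1r ?mulN1r ?opprK ?mulrN ?mulNr ?opprK ?ii ?eqxx ?orbT.
Qed.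

Definition o0 : 'I_4 := @Ordinal 4 0 isT.
Definition o1 : 'I_4 := @Ordinal 4 1 isT.
Definition o2 : 'I_4 := @Ordinal 4 2 isT.
Definition o3 : 'I_4 := @Ordinal 4 3 isT.

Definition midx (a b : 'I_4) : 'I_4 :=
  match val a, val b with
  | 0, _ => b
  | _, 0 => a
  | 1, 1 | 2, 2 | 3, 3 => o0
  | 1, 2 | 2, 1 => o3
  | 1, 3 | 3, 1 => o2
  | _, _ => o1
  end.

Definition mph (a b : 'I_4) : algC :=
  match val a, val b with
  | 1, 2 | 2, 3 | 3, 1 => 'i
  | 2, 1 | 3, 2 | 1, 3 => - 'i
  | _, _ => 1
  end.

Definition msg (a b : 'I_4) : algC :=
  match val a, val b with
  | 1, 2 | 2, 3 | 3, 1 | 2, 1 | 3, 2 | 1, 3 => -1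
  | _, _ => 1
  end.

Lemma sig_mul (a b : 'I_4) (x y : bool) :
  sig a x false * sig b false y + sig a x true * sig b true y = mph a b * sig (midx a b) x y.
Proof.
case: a => [[|[|[|[|//]]]] ?]; case: b => [[|[|[|[|//]]]] ?];
case: x; case: y; rewrite /sig /mph /midx /=;
rewrite ?mul1r ?mulr1 ?mul0r ?mulr0 ?addr0 ?add0r ?mulrN ?mulNr ?opprK ?ii ?mulN1r ?mulrN1 ?opprK ?mulr1 ?mul1r //.
Qed.

Lemma mulmx2 (A B : 'M[algC]_2) x y : (A *m B) x y = A x ord0 * B ord0 y + A x ord_max * B ord_max y.
Proof.
rewrite mxE big_ord_recl big_ord1; have -> : lift ord0 ord0 = ord_max :> 'I_2 by exact: val_inj.
by [].
Qed.

Lemma sigm_mul a b : sigm a *m sigm b = mph a b *: sigm (midx a b).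
Proof. by apply/matrixP => x y; rewrite mulmx2 !mxE /= sig_mul. Qed.

Lemma midxC a b : midx b a = midx a b.
Proof.
by apply: val_inj; case: a => [[|[|[|[|//]]]] ?]; case: b => [[|[|[|[|//]]]] ?].
Qed.

Lemma mphC a b : mph b a = msg a b * mph a b.
Proof.
case: a => [[|[|[|[|//]]]] ?]; case: b => [[|[|[|[|//]]]] ?];
by rewrite /mph /msg /= ?mul1r ?mulN1r ?opprK.
Qed.

Lemma mph_phase a b : phase (mph a b).
Proof.
by case: a => [[|[|[|[|//]]]] ?]; case: b => [[|[|[|[|//]]]] ?];
 rewrite /mph /phase /= !inE eqxx ?orbT.
Qed.

Lemma msg_sgn a b : sgn (msg a b).
Proof.
by case: a => [[|[|[|[|//]]]] ?]; case: b => [[|[|[|[|//]]]] ?];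
 rewrite /msg /sgn /= !inE eqxx ?orbT.
Qed.

Lemma sigm_sq a : sigm a *m sigm a = 1%:M.
Proof.
apply/matrixP => x y; rewrite mulmx2 !mxE /=.
case: a => [[|[|[|[|//]]]] ?];
case: x => [[|[|//]] ?]; case: y => [[|[|//]] ?];
rewrite /sig /= ?mul1r ?mulr1 ?mul0r ?mulr0 ?addr0 ?add0r ?mulrN ?mulNr ?opprK ?ii ?mulN1r ?mulrN1 ?opprK //.
all: try (rewrite mulrN mulNr opprK ii //).
all: by rewrite mulr1.
Qed.

Definition consf t (c : 'I_4) (r : 'I_t -> 'I_4) : 'I_t.+1 -> 'I_4 :=
  fun j => match unlift ord0 j with Some j' => r j' | None => c end.

Lemma pstr_cons t c (r : 'I_t -> 'I_4) : pstr (consf c r) = tens2 (sigm c) (pstr r).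
Proof.
rewrite pstrS /consf unlift_none; congr (tens2 _ _).
by apply: pstr_ext => j; rewrite liftK.
Qed.

Lemma pstr_mul t (p q : 'I_t -> 'I_4) :
  exists r (ph e : algC), [/\ phase ph, sgn e,
    pstr p *m pstr q = ph *: pstr r &
    pstr q *m pstr p = (e * ph) *: pstr r].
Proof.
elim: t p q => [|t IH] p q.
  exists p, 1, 1; rewrite (pstr0 p) (pstr0 q) mulmx1 !scale1r mul1r scale1r.
  by split => //; rewrite /phase /sgn !inE eqxx.
have [r [ph [e [Hph He H1 H2]]]] := IH (fun j => p (lift ord0 j)) (fun j => q (lift ord0 j)).
exists (consf (midx (p ord0) (q ord0)) r), (mph (p ord0) (q ord0) * ph),
  (msg (p ord0) (q ord0) * e).
split.
- by apply: phaseM => //; apply: mph_phase.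
- by apply: sgnM => //; apply: msg_sgn.
- rewrite (pstrS p) (pstrS q) pstr_cons tens2_mul sigm_mul H1.
  by rewrite tens2Zl tens2Zr scalerA mulrC.
- rewrite (pstrS p) (pstrS q) pstr_cons tens2_mul H2 sigm_mul mphC midxC.
  rewrite tens2Zl tens2Zr scalerA; congr (_ *: _).
  by rewrite mulrACA.
Qed.

Lemma pstr_sq t (p : 'I_t -> 'I_4) : pstr p *m pstr p = 1%:M.
Proof.
elim: t p => [|t IH] p; first by rewrite pstr0 mulmx1.
by rewrite pstrS tens2_mul IH sigm_sq tens2_1.
Qed.

Section Pauli.
Variable t : nat.
Implicit Types A B : 'M[algC]_(2 ^ t).

Lemma pauli_mul A B : is_pauli A -> is_pauli B -> is_pauli (A *m B).
Proof.
move=> [a [p [Ha ->]]] [b [q [Hb ->]]].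
have [r [ph [e [Hph He H1 H2]]]] := pstr_mul p q.
exists (a * b * ph), r; split; first by apply: phaseM => //; apply: phaseM.
by rewrite -scalemxAl -scalemxAr H1 !scalerA.
Qed.

Lemma pauli_scale c A : phase c -> is_pauli A -> is_pauli (c *: A).
Proof.
move=> Hc [a [p [Ha ->]]]; exists (c * a), p; split; first exact: phaseM.
by rewrite scalerA.
Qed.

Lemma pauli_comm A B : is_pauli A -> is_pauli B ->
  exists e, sgn e /\ B *m A = e *: (A *m B).
Proof.
move=> [a [p [Ha ->]]] [b [q [Hb ->]]].
have [r [ph [e [Hph He H1 H2]]]] := pstr_mul p q.
exists e; split => //.
rewrite -!scalemxAl -!scalemxAr H1 H2 !scalerA; congr (_ *: _).
by rewrite mulrC [b * a]mulrC -!mulrA; congr (_ * _); rewrite mulrC -mulrA.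
Qed.

Lemma pauli_sq A : is_pauli A -> exists k, sgn k /\ A *m A = k *: 1%:M.
Proof.
move=> [a [p [Ha ->]]]; exists (a * a); split; first exact: phase_sq.
by rewrite -scalemxAl -scalemxAr pstr_sq scalerA.
Qed.

Lemma pauli_pstr (p : 'I_t -> 'I_4) : is_pauli (pstr p).
Proof. by exists 1, p; rewrite scale1r /phase !inE eqxx. Qed.

End Pauli.

Lemma pauli_tens t c s (R : 'M[algC]_(2 ^ t)) : phase c -> is_pauli R ->
  is_pauli (c *: tens2 (sigm s) R).
Proof.
move=> Hc [a [p [Ha ->]]]; exists (c * a), (consf s p); split; first exact: phaseM.
by rewrite pstr_cons tens2Zr scalerA.
Qed.

Lemma pauli_dec t (P : 'M[algC]_(2 ^ t.+1)) : is_pauli P ->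
  exists c s (p : 'I_t -> 'I_4), phase c /\ P = c *: tens2 (sigm s) (pstr p).
Proof.
move=> [c [p [Hc ->]]]; exists c, (p ord0), (fun j => p (lift ord0 j)); split => //.
by rewrite pstrS.
Qed.
Lemma prod_bool n (F : 'I_n -> bool) :
  \prod_(j < n) ((F j)%:R : algC) = ([forall j, F j])%:R.
Proof.
case: (boolP [forall j, F j]) => [/forallP H | /forallPn [j0 Hj0]].
  by rewrite big1 // => j _; rewrite H.
by rewrite (bigD1 j0) //= (negbTE Hj0) mul0r.
Qed.

Lemma natb_congr (a b : bool) : a = b -> (a%:R : algC) = b%:R.
Proof. by move->. Qed.

Lemma eqNr0 (x : algC) : x = - x -> x = 0.
Proof.
move=> h; have : x *+ 2 = 0 by rewrite mulr2n {2}h subrr.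
by move/eqP; rewrite mulrn_eq0 /= => /eqP.
Qed.

Section Q.
Variable t : nat.
Variable j : 'I_t.
Local Notation e := (t.-1 - j)%N.

Lemma et : (e < t)%N.
Proof. have := ltn_ord j; lia. Qed.

Lemma e_inj (j' : 'I_t) : j' != j -> (t.-1 - j' != e)%N.
Proof.
move=> ne; apply/eqP => h; move/eqP: ne; apply.
apply: val_inj => /=; have := ltn_ord j; have := ltn_ord j'; lia.
Qed.

Lemma qbit_uniq (i k : 'I_(2 ^ t)) : (forall j' : 'I_t, qbit t i j' = qbit t k j') -> i = k.
Proof.
move=> H; apply: val_inj; apply: (bits_uniq (ltn_ord i) (ltn_ord k)) => f hf.
have hf' : (t.-1 - f < t)%N by lia.
have := H (Ordinal hf'); rewrite /qbit /=.
by have -> : (t.-1 - (t.-1 - f) = f)%N by lia.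
Qed.

Definition flipo (i : 'I_(2 ^ t)) : 'I_(2 ^ t) :=
  Ordinal (setb_lt (~~ qbit t i j) et (ltn_ord i)).

Lemma qbit_flip (i : 'I_(2 ^ t)) (j' : 'I_t) : qbit t (flipo i) j' = if j' == j then ~~ qbit t i j else qbit t i j'.
Proof.
rewrite {1}/qbit /= setb_bit.
case: (eqVneq j' j) => [->|ne]; first by rewrite !eqxx.
by rewrite (negbTE (e_inj ne)).
Qed.

Lemma clr_val (i : 'I_(2 ^ t)) : val (clr i j) = setb e i false.
Proof.
rewrite /clr insubdK; first by rewrite setb_false.
by rewrite unfold_in /=; apply: leq_ltn_trans (leq_subr _ _) (ltn_ord i).
Qed.

Lemma qbit_clr (i : 'I_(2 ^ t)) (j' : 'I_t) : qbit t (clr i j) j' = if j' == j then false else qbit t i j'.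
Proof.
rewrite {1}/qbit clr_val setb_bit.
case: (eqVneq j' j) => [->|ne]; first by rewrite !eqxx.
by rewrite (negbTE (e_inj ne)).
Qed.

Lemma flip_flip (i : 'I_(2 ^ t)) : flipo (flipo i) = i.
Proof.
by apply: qbit_uniq => j'; rewrite !qbit_flip; case: (eqVneq j' j) => [->|]; rewrite ?eqxx ?negbK.
Qed.

Lemma clr_flip (i : 'I_(2 ^ t)) : clr (flipo i) j = clr i j.
Proof.
by apply: qbit_uniq => j'; rewrite !qbit_clr qbit_flip; case: eqP.
Qed.

Lemma clr_id (i : 'I_(2 ^ t)) : qbit t i j = false -> clr i j = i.
Proof.
by move=> h; apply: qbit_uniq => j'; rewrite qbit_clr; case: (eqVneq j' j) => [->|].
Qed.

Lemma clr_fl (i : 'I_(2 ^ t)) : qbit t i j = true -> clr i j = flipo i.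
Proof.
by move=> h; apply: qbit_uniq => j'; rewrite qbit_clr qbit_flip; case: ifP; rewrite ?h.
Qed.

Definition Xm : 'M[algC]_(2 ^ t) := pstr (fun j' => if j' == j then o1 else o0).
Definition Zm : 'M[algC]_(2 ^ t) := pstr (fun j' => if j' == j then o3 else o0).
Definition zf (i : 'I_(2 ^ t)) : algC := if qbit t i j then -1 else 1.

Lemma XmE (i k : 'I_(2 ^ t)) : Xm i k = (k == flipo i)%:R.
Proof.
rewrite mxE (eq_bigr (fun j' : 'I_t => (qbit t k j' == qbit t (flipo i) j')%:R)) => [|j' _].
  rewrite prod_bool; apply: natb_congr; apply/forallP/eqP => [H|->//].
  by apply: qbit_uniq => j'; apply/eqP.
rewrite qbit_flip; case: ifP => [/eqP E|_]; first rewrite E;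
by case: (qbit t i _); case: (qbit t k _).
Qed.

Lemma ZmE (i k : 'I_(2 ^ t)) : Zm i k = (i == k)%:R * zf i.
Proof.
rewrite mxE (eq_bigr (fun j' : 'I_t => (qbit t i j' == qbit t k j')%:R *
   (if j' == j then zf i else 1))) => [|j' _].
  rewrite big_split /= prod_bool (bigD1 j) //= eqxx big1 ?mulr1.
    congr (_ * _); apply: natb_congr; apply/forallP/eqP => [H|->//].
    by apply: qbit_uniq => j'; apply/eqP.
  by move=> j' /negbTE ->.
rewrite /zf; case: eqP => [->|_]; by case: (qbit t i _); case: (qbit t k _);
  rewrite /sig /= ?mulr1 ?mul1r ?mul0r.
Qed.

Lemma mulXr (W : 'M[algC]_(2 ^ t)) (i k : 'I_(2 ^ t)) : (W *m Xm) i k = W i (flipo k).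
Proof.
rewrite mxE (bigD1 (flipo k)) //= XmE flip_flip eqxx mulr1 big1 ?addr0 // => m hm.
rewrite XmE; case: eqP => [h|_]; last by rewrite mulr0.
by move: hm; rewrite h flip_flip eqxx.
Qed.

Lemma mulXl (W : 'M[algC]_(2 ^ t)) (i k : 'I_(2 ^ t)) : (Xm *m W) i k = W (flipo i) k.
Proof.
rewrite mxE (bigD1 (flipo i)) //= XmE eqxx mul1r big1 ?addr0 // => m hm.
by rewrite XmE (negbTE hm) mul0r.
Qed.

Lemma mulZr (W : 'M[algC]_(2 ^ t)) (i k : 'I_(2 ^ t)) : (W *m Zm) i k = W i k * zf k.
Proof.
rewrite mxE (bigD1 k) //= ZmE eqxx mul1r big1 ?addr0 // => m hm.
by rewrite ZmE (negbTE hm) mul0r mulr0.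
Qed.

Lemma mulZl (W : 'M[algC]_(2 ^ t)) (i k : 'I_(2 ^ t)) : (Zm *m W) i k = zf i * W i k.
Proof.
rewrite mxE (bigD1 i) //= ZmE eqxx mul1r big1 ?addr0 // => m hm.
by rewrite ZmE eq_sym (negbTE hm) mul0r mul0r.
Qed.

Lemma triv_comm (W : 'M[algC]_(2 ^ t)) : acts_trivially W j ->
  W *m Xm = Xm *m W /\ W *m Zm = Zm *m W.
Proof.
move=> H; split; apply/matrixP => i k.
  rewrite mulXr mulXl (H i) (H (flipo i)) !clr_flip !qbit_flip eqxx.
  by case: (qbit t i j); case: (qbit t k j).
rewrite mulZr mulZl (H i) /zf.
case: (qbit t i j); case: (qbit t k j) => /=; by rewrite ?mulr0 ?mul0r ?mulr1 ?mul1r ?mulrN1 ?mulN1r.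
Qed.

Lemma comm_triv (W : 'M[algC]_(2 ^ t)) :
  W *m Xm = Xm *m W -> W *m Zm = Zm *m W -> acts_trivially W j.
Proof.
move=> HX HZ i k.
have hz := congr1 (fun M : 'M[algC]_(2 ^ t) => M i k) HZ; rewrite /= mulZr mulZl /zf in hz.
case hi: (qbit t i j); case hk: (qbit t k j) => /=.
- rewrite (clr_fl hi) (clr_fl hk).
  have := congr1 (fun M : 'M[algC]_(2 ^ t) => M i (flipo k)) HX; rewrite /= mulXr mulXl flip_flip.
  by [].
- rewrite hi hk mulr1 mulN1r in hz; exact: eqNr0.
- rewrite hi hk mulrN1 mul1r in hz; apply: eqNr0; by rewrite -hz opprK.
- by rewrite (clr_id hi) (clr_id hk).
Qed.

End Q.

Lemma supp_lemma t (C Q : 'M[algC]_(2 ^ t)) (j : 'I_t) :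
  (forall W, is_pauli W -> W *m C = C *m W -> W *m Q = Q *m W) ->
  acts_trivially C j -> acts_trivially Q j.
Proof.
move=> H /triv_comm [hX hZ].
apply: comm_triv.
  by apply/esym/H; [apply: pauli_pstr | rewrite hX].
by apply/esym/H; [apply: pauli_pstr | rewrite hZ].
Qed.

Definition E0 : 'M[algC]_2 := ketbra ord0.
Definition E1 : 'M[algC]_2 := ketbra ord_max.

Lemma sandwich t (A : 'M[algC]_2) (M X Y : 'M[algC]_(2 ^ t)) :
  (tens2 E0 1%:M + tens2 E1 X) *m tens2 A M *m (tens2 E0 1%:M + tens2 E1 Y) =
  tens2 (E0 *m A *m E0) M + tens2 (E0 *m A *m E1) (M *m Y) +
  tens2 (E1 *m A *m E0) (X *m M) + tens2 (E1 *m A *m E1) (X *m M *m Y).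
Proof.
rewrite !mulmxDl !mulmxDr !tens2_mul !mul1mx !mulmx1.
by rewrite !addrA; congr (_ + _); rewrite -!addrA; congr (_ + _); rewrite addrC.
Qed.

Lemma lhs_expand t (A : 'M[algC]_2) (M X : 'M[algC]_(2 ^ t)) :
  (tens2 E0 1%:M + tens2 E1 X) *m tens2 A M = tens2 (E0 *m A) M + tens2 (E1 *m A) (X *m M).
Proof. by rewrite mulmxDl !tens2_mul mul1mx. Qed.

Lemma mx2P (A B : 'M[algC]_2) :
  A ord0 ord0 = B ord0 ord0 -> A ord0 ord_max = B ord0 ord_max ->
  A ord_max ord0 = B ord_max ord0 -> A ord_max ord_max = B ord_max ord_max -> A = B.
Proof.
move=> h1 h2 h3 h4; apply/matrixP => x y.
have ex (z : 'I_2) : z = ord0 \/ z = ord_max.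
  by case: z => [[|[|//]] ?]; [left|right]; apply: val_inj.
by case: (ex x) => ->; case: (ex y) => ->.
Qed.

Ltac m2 := apply: mx2P; rewrite ?mulmx2 ?mxE /= ?mulmx2 ?mxE /=;
  rewrite /sig /= ?mul1r ?mulr1 ?mul0r ?mulr0 ?addr0 ?add0r //.

Lemma diag_facts (s : 'I_4) : (val s == 0)%N || (val s == 3)%N ->
  [/\ E0 *m sigm s *m E0 = E0 *m sigm s, E0 *m sigm s *m E1 = 0,
      E1 *m sigm s *m E0 = 0 & E1 *m sigm s *m E1 = E1 *m sigm s].
Proof.
case: s => [[|[|[|[|//]]]] ?] // _; split; m2.
Qed.

Lemma off_facts (s : 'I_4) : (val s == 1)%N || (val s == 2)%N ->
  [/\ E0 *m sigm s *m E0 = 0, E0 *m sigm s *m E1 = E0 *m sigm s,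
      E1 *m sigm s *m E0 = E1 *m sigm s & E1 *m sigm s *m E1 = 0].
Proof.
case: s => [[|[|[|[|//]]]] ?] // _; split; m2.
Qed.

Section Main.
Variable t : nat.
Variable C : 'M[algC]_(2 ^ t).
Hypothesis Cu1 : C *m adjmx C = 1%:M.
Hypothesis Cu2 : adjmx C *m C = 1%:M.
Hypothesis Cl : forall P, is_pauli P -> is_pauli (C *m P *m adjmx C).
Hypothesis Kp : is_pauli (C *m C).
Variable p : 'I_t -> 'I_4.

Local Notation Cd := (adjmx C).
Local Notation K := (C *m C).
Local Notation R := (pstr p).
Local Notation R1 := (C *m R *m Cd).

Lemma RR : R *m R = 1%:M. Proof. exact: pstr_sq. Qed.
Lemma Rp : is_pauli R. Proof. exact: pauli_pstr. Qed.
Lemma R1p : is_pauli R1. Proof. exact: Cl Rp. Qed.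

Lemma key : exists e, sgn e /\ Cd *m R *m C = e *: R1.
Proof.
have [k [sk KK]] := pauli_sq Kp.
have CdCd : Cd *m Cd = k *: K.
  have h1 : k *: (K *m K) = 1%:M by rewrite KK scalerA sgn_sq // scale1r.
  rewrite -[LHS]mulmx1 -h1. rewrite -(scalemxAr k (Cd *m Cd)); congr (_ *: _).
  by rewrite !mulmxA -(mulmxA Cd Cd C) Cu2 mulmx1 Cu2 mul1mx.
have CdE : Cd = k *: (C *m K).
  transitivity (Cd *m Cd *m C); first by rewrite -mulmxA Cu2 mulmx1.
  by rewrite CdCd -scalemxAl !mulmxA.
have CE : C = K *m Cd by rewrite -mulmxA Cu1 mulmx1.
have [e [se KR]] := pauli_comm Rp Kp.
exists e; split => //.
have KRK : K *m R *m K = (e * k) *: R.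
  by rewrite KR -scalemxAl -mulmxA KK -scalemxAr mulmx1 scalerA.
transitivity ((k *: (C *m K)) *m R *m (K *m Cd)); first by rewrite -CdE -CE.
rewrite -!scalemxAl.
have -> : C *m K *m R *m (K *m Cd) = C *m (K *m R *m K) *m Cd by rewrite !mulmxA.
rewrite KRK -scalemxAr -scalemxAl scalerA; congr (_ *: _).
by rewrite mulrCA (sgn_sq sk) mulr1.
Qed.


Lemma CdCd : exists k, sgn k /\ Cd *m Cd = k *: K.
Proof.
have [k [sk KK]] := pauli_sq Kp.
exists k; split => //.
have h1 : k *: (K *m K) = 1%:M by rewrite KK scalerA sgn_sq // scale1r.
rewrite -[LHS]mulmx1 -h1. rewrite -(scalemxAr k (Cd *m Cd)); congr (_ *: _).
by rewrite !mulmxA -(mulmxA Cd Cd C) Cu2 mulmx1 Cu2 mul1mx.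
Qed.

Lemma commS (A B W : 'M[algC]_(2 ^ t)) a b :
  A *m W = a *: (W *m A) -> B *m W = b *: (W *m B) ->
  (A *m B) *m W = (a * b) *: (W *m (A *m B)).
Proof.
move=> hA hB; rewrite -mulmxA hB -scalemxAr (mulmxA A W B) hA -scalemxAl scalerA !mulmxA.
by rewrite mulrC.
Qed.

Lemma comm1 (A W : 'M[algC]_(2 ^ t)) : A *m W = W *m A -> A *m W = 1 *: (W *m A).
Proof. by rewrite scale1r. Qed.

Section W.
Variable W : 'M[algC]_(2 ^ t).
Hypothesis Wp : is_pauli W.
Hypothesis WC : W *m C = C *m W.

Lemma CdW : Cd *m W = 1 *: (W *m Cd).
Proof.
rewrite scale1r -[LHS]mulmx1 -Cu1 !mulmxA -(mulmxA Cd W C) WC.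
by rewrite mulmxA Cu2 mul1mx.
Qed.

Lemma CW : C *m W = 1 *: (W *m C). Proof. by rewrite scale1r WC. Qed.

Lemma RW : exists f, sgn f /\ R *m W = f *: (W *m R).
Proof. exact: pauli_comm Wp Rp. Qed.

Lemma R1W f : R *m W = f *: (W *m R) -> R1 *m W = f *: (W *m R1).
Proof.
move=> h; have := commS (commS CW h) CdW.
by rewrite !mul1r mulr1.
Qed.

Lemma KW : K *m W = 1 *: (W *m K).
Proof. by have := commS CW CW; rewrite mulr1. Qed.
End W.

Lemma diag_case (c : algC) (s : 'I_4) : (val s == 0)%N || (val s == 3)%N ->
  exists Q, [/\ is_pauli Q, exists f, sgn f /\ Q *m C = f *: (C *m Q),
    (forall W, is_pauli W -> W *m C = C *m W -> W *m Q = Q *m W) &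
    ctrl C *m (c *: tens2 (sigm s) R) =
      tens2 1%:M 1%:M *m ctrl Q *m (c *: tens2 (sigm s) R) *m ctrl C].
Proof.
move=> ds; exists (R1 *m R); split.
- exact: pauli_mul R1p Rp.
- have [e [se E]] := key.
  have [e2 [se2 E2]] := pauli_comm Rp R1p.
  have QC : R1 *m R *m C = e *: (C *m R *m R1).
    have -> : R1 *m R *m C = C *m R *m (Cd *m R *m C) by rewrite !mulmxA.
    by rewrite E -scalemxAr.
  have CQ : C *m (R1 *m R) = e2 *: (C *m R *m R1).
    by rewrite E2 -scalemxAr !mulmxA.
  exists (e * e2); split; first exact: sgnM.
  rewrite QC CQ scalerA; congr (_ *: _).
  by rewrite -mulrA sgn_sq // mulr1.
- move=> W Wp WC; have [f [sf hf]] := RW Wp.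
  have := commS (R1W WC hf) hf; rewrite sgn_sq // scale1r => ->.
  by [].
- rewrite tens2_1 mul1mx /ctrl -!scalemxAr -scalemxAl; congr (_ *: _).
  rewrite sandwich -/E0 -/E1 lhs_expand.
  have [h1 h2 h3 h4] := diag_facts ds.
  rewrite h1 h2 h3 h4 !tens20l !addr0; congr (_ + tens2 _ _).
  by rewrite -(mulmxA _ R R) RR mulmx1 -mulmxA Cu2 mulmx1.
Qed.

Local Notation R2 := (Cd *m R *m Cd).

Lemma off_case (c : algC) (s : 'I_4) : (val s == 1)%N || (val s == 2)%N ->
  exists Q, [/\ is_pauli Q, is_pauli R2, exists f, sgn f /\ Q *m C = f *: (C *m Q),
    (forall W, is_pauli W -> W *m C = C *m W -> W *m Q = Q *m W) &
    ctrl C *m (c *: tens2 (sigm s) R) =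
      tens2 1%:M C *m ctrl Q *m (c *: tens2 (sigm s) R2) *m ctrl C].
Proof.
move=> ds.
have QE : R *m C *m R *m C = R *m (R1 *m K).
  by rewrite !mulmxA -(mulmxA _ Cd C) Cu2 mulmx1.
exists (R *m C *m R *m C); split.
- by rewrite QE; apply: pauli_mul Rp (pauli_mul R1p Kp).
- have [e [se E]] := key; have [k [sk KK]] := CdCd.
  have -> : R2 = (Cd *m R *m C) *m (Cd *m Cd) by rewrite !mulmxA -(mulmxA _ C Cd) Cu1 mulmx1.
  rewrite E KK -scalemxAl -scalemxAr scalerA.
  apply: pauli_scale; first by apply: sgn_phase; apply: sgnM.
  exact: pauli_mul R1p Kp.
- have [eK [seK EK]] := pauli_comm Rp Kp.
  have [e2 [se2 E2]] := pauli_comm Rp R1p.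
  have CQ : C *m (R *m C *m R *m C) = (eK * e2) *: (R *m C *m R *m C *m C).
    have -> : C *m (R *m C *m R *m C) = R1 *m (K *m R) *m C.
      by rewrite !mulmxA -(mulmxA _ Cd C) Cu2 mulmx1.
    have H : R1 *m (K *m R) = (eK * e2) *: (R *m (R1 *m K)).
      rewrite EK -scalemxAr (mulmxA R1 R K) E2 -scalemxAl scalerA.
      by rewrite (mulmxA R R1 K).
    by rewrite H -scalemxAl QE.
  exists (eK * e2); split; first exact: sgnM.
  by rewrite CQ scalerA sgn_sq ?scale1r //; apply: sgnM.
- move=> W Wp WC; have [f [sf hf]] := RW Wp.
  rewrite QE.
  have := commS hf (commS (R1W WC hf) (KW WC)).
  by rewrite mulr1 sgn_sq // scale1r => ->.
- have -> : tens2 1%:M C *m ctrl (R *m C *m R *m C) *m (c *: tens2 (sigm s) R2) *m ctrl C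
     = tens2 1%:M C *m (ctrl (R *m C *m R *m C) *m (c *: tens2 (sigm s) R2) *m ctrl C).
    by rewrite !mulmxA.
  rewrite /ctrl -!scalemxAr -scalemxAl -scalemxAr; congr (_ *: _).
  rewrite sandwich -/E0 -/E1 lhs_expand.
  have [h1 h2 h3 h4] := off_facts ds.
  rewrite h1 h2 h3 h4 !tens20l add0r addr0 mulmxDr !tens2_mul !mul1mx.
  congr (tens2 _ _ + tens2 _ _).
    by rewrite !mulmxA Cu1 mul1mx -mulmxA Cu2 mulmx1.
  rewrite !mulmxA -(mulmxA _ C Cd) Cu1 mulmx1 -(mulmxA _ R R) RR mulmx1.
  by rewrite -(mulmxA _ C Cd) Cu1 mulmx1.
Qed.

End Main.

Theorem theorem1 (t : nat) (C : 'M[algC]_(2 ^ t)) (P : 'M[algC]_(2 ^ t.+1)) :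
  PSC C -> is_pauli P ->
  exists (P' : 'M[algC]_(2 ^ t.+1)) (Q : 'M[algC]_(2 ^ t)) (b : bool),
    [/\ is_pauli P', is_pauli Q,
        Q *m C = C *m Q \/ Q *m C = - (C *m Q),
        (forall j : 'I_t, in_supp Q j -> in_supp C j) &
        ctrl C *m P =
          tens2 1%:M (if b then C else 1%:M) *m ctrl Q *m P' *m ctrl C].
Proof.
move=> [[[Cu1 Cu2] Cl] [_ Kp]] HP.
have [c [s [p [Hc ->]]]] := pauli_dec HP.
have sgnE (Q : 'M[algC]_(2 ^ t)) : (exists f, sgn f /\ Q *m C = f *: (C *m Q)) ->
    Q *m C = C *m Q \/ Q *m C = - (C *m Q).
  move=> [f [sf ->]]; move: sf; rewrite /sgn !inE; case/orP => /eqP ->.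
    by left; rewrite scale1r.
  by right; rewrite scaleN1r.
have suppE (Q : 'M[algC]_(2 ^ t)) :
    (forall W, is_pauli W -> W *m C = C *m W -> W *m Q = Q *m W) ->
    forall j : 'I_t, in_supp Q j -> in_supp C j.
  by move=> H j nQ tC; apply: nQ; apply: supp_lemma H tC.
have : ((val s == 0) || (val s == 3))%N || ((val s == 1) || (val s == 2))%N.
  by case: s => [[|[|[|[|//]]]] ?].
case/orP => ds.
  have [Q [Qp QC QW E]] := diag_case Cu1 Cu2 Cl Kp p c ds.
  exists (c *: tens2 (sigm s) (pstr p)), Q, false; split => //.
  - exact: pauli_tens (pauli_pstr p).
  - exact: sgnE.
  - exact: suppE.
have [Q [Qp R2p QC QW E]] := off_case Cu1 Cu2 Cl Kp p c ds.
exists (c *: tens2 (sigm s) (adjmx C *m pstr p *m adjmx C)), Q, true; split => //.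
- exact: pauli_tens.
- exact: sgnE.
- exact: suppE.
Qed.
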